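(* Let $A$ be a ring with Jacobson radical $J(A)$. If the factor ring $A/J(A)$ is centrally essential, then $A/J(A)$ is commutative and $A$ is both right quasi-invariant and left quasi-invariant.
   Context: All rings are associative, unital and non-zero. $Z(A)$ denotes the center of a ring $A$. A ring $A$ is centrally essential if either $A$ is commutative or for every non-central element $a\in A$ there exist non-zero central elements $x,y\in Z(A)$ with $ax=y$ (equivalently, the module $A_{Z(A)}$ is an essential extension of $Z(A)_{Z(A)}$). A ring is right (resp. left) quasi-invariant if every maximal right (resp. left) ideal of it is a two-sided ideal. *)

(* Defs.v *)
From mathcomp Require Import all_boot all_algebra.
Set Implicit Arguments.
Unset Strict Implicit.
Unset Printing Implicit Defensive.
Import GRing.Theory.
Local Open Scope ring_scope.

Section Ideals.
Variable A : nzRingType.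

Definition right_ideal (I : A -> Prop) : Prop :=
  [/\ I 0, (forall x y, I x -> I y -> I (x + y)), (forall x, I x -> I (- x))
    & (forall x r, I x -> I (x * r))].

Definition left_ideal (I : A -> Prop) : Prop :=
  [/\ I 0, (forall x y, I x -> I y -> I (x + y)), (forall x, I x -> I (- x))
    & (forall x r, I x -> I (r * x))].

Definition two_sided_ideal (I : A -> Prop) : Prop := right_ideal I /\ left_ideal I.

Definition maximal_right_ideal (M : A -> Prop) : Prop :=
  [/\ right_ideal M, (exists x, ~ M x) &
      forall N : A -> Prop, right_ideal N -> (forall x, M x -> N x) ->
        (forall x, N x <-> M x) \/ (forall x, N x)].

Definition maximal_left_ideal (M : A -> Prop) : Prop :=
  [/\ left_ideal M, (exists x, ~ M x) &
      forall N : A -> Prop, left_ideal N -> (forall x, M x -> N x) ->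
        (forall x, N x <-> M x) \/ (forall x, N x)].

Definition jacobson (x : A) : Prop :=
  forall M, maximal_right_ideal M -> M x.

Definition right_quasi_invariant : Prop :=
  forall M, maximal_right_ideal M -> two_sided_ideal M.
Definition left_quasi_invariant : Prop :=
  forall M, maximal_left_ideal M -> two_sided_ideal M.

(* Notions for the factor ring A/I, written on representatives:
   the class of a is 0 iff I a; classes of a and b are equal iff I (a - b). *)
Section Factor.
Variable I : A -> Prop.

Definition central_mod (a : A) : Prop := forall b, I (a * b - b * a).

Definition commutative_mod : Prop := forall a b, I (a * b - b * a).

Definition centrally_essential_mod : Prop :=
  commutative_mod \/
  forall a, ~ central_mod a ->
    exists x y, [/\ central_mod x, central_mod y, ~ I x, ~ I y & I (a * x - y)].
End Factor.
End Ideals.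

(* Main.v *)
Require Import Defs.
From mathcomp Require Import all_boot all_algebra.
From mathcomp Require Import boolp classical_sets.
From Stdlib Require Import Classical.
Set Implicit Arguments.
Unset Strict Implicit.
Unset Printing Implicit Defensive.
Import GRing.Theory.
Local Open Scope ring_scope.

Section Cong.
Variable A : nzRingType.
Variable J : A -> Prop.
Hypothesis J0 : J 0.
Hypothesis JD : forall x y, J x -> J y -> J (x + y).
Hypothesis JN : forall x, J x -> J (- x).
Hypothesis JMr : forall x r, J x -> J (x * r).
Hypothesis JMl : forall x r, J x -> J (r * x).
Hypothesis Jsp : forall u, central_mod J u -> J (u * u) -> J u.

Definition eqJ x y := J (x - y).

Lemma eqJ_refl x : eqJ x x.
Proof. by rewrite /eqJ subrr. Qed.
Lemma eqJ_eq x y : x = y -> eqJ x y.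
Proof. by move=> ->; apply: eqJ_refl. Qed.
Lemma eqJ_sym x y : eqJ x y -> eqJ y x.
Proof. by move=> /JN; rewrite /eqJ opprB. Qed.
Lemma eqJ_trans x y z : eqJ x y -> eqJ y z -> eqJ x z.
Proof. by move=> h1 h2; have := JD h1 h2; rewrite /eqJ addrA subrK. Qed.
Lemma eqJ_add x y x' y' : eqJ x x' -> eqJ y y' -> eqJ (x + y) (x' + y').
Proof. by move=> h1 h2; have := JD h1 h2; rewrite /eqJ opprD addrACA. Qed.
Lemma eqJ_opp x y : eqJ x y -> eqJ (- x) (- y).
Proof. by move=> /JN; rewrite /eqJ opprB opprK addrC. Qed.
Lemma eqJ_subr x y x' y' : eqJ x x' -> eqJ y y' -> eqJ (x - y) (x' - y').
Proof. by move=> h1 h2; apply: eqJ_add => //; apply: eqJ_opp. Qed.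
Lemma eqJ_mul x y x' y' : eqJ x x' -> eqJ y y' -> eqJ (x * y) (x' * y').
Proof.
move=> h1 h2; have := JD (JMr y h1) (JMl x' h2).
by rewrite /eqJ mulrBl mulrBr addrA subrK.
Qed.
Lemma eqJ0 x : J x <-> eqJ x 0.
Proof. by rewrite /eqJ subr0. Qed.
Lemma eqJ_J x y : eqJ x y -> J y -> J x.
Proof. by move=> h /eqJ0 h2; apply/eqJ0; apply: eqJ_trans h h2. Qed.

Lemma central_eqJ x y : eqJ x y -> central_mod J y -> central_mod J x.
Proof.
move=> h cy b; apply: (eqJ_trans (eqJ_mul h (eqJ_refl b))).
apply: eqJ_trans (cy b) _; exact: eqJ_mul (eqJ_refl b) (eqJ_sym h).
Qed.

Lemma central_mul x y : central_mod J x -> central_mod J y -> central_mod J (x * y).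
Proof.
move=> cx cy b; apply: eqJ_trans (eqJ_eq (esym (mulrA _ _ _))) _.
apply: eqJ_trans (eqJ_mul (eqJ_refl x) (cy b)) _.
apply: eqJ_trans (eqJ_eq (mulrA _ _ _)) _.
apply: eqJ_trans (eqJ_mul (cx b) (eqJ_refl y)) _.
exact: eqJ_eq (esym (mulrA _ _ _)).
Qed.

Lemma comm_mod : centrally_essential_mod J -> commutative_mod J.
Proof.
case=> // H a b; apply: NNPP => nab.
have [d [cc nc]] : exists d, central_mod J (a * d - d * a) /\ ~ J (a * d - d * a).
  case: (classic (central_mod J (a * b - b * a))) => cab; first by exists b.
  have [x [y [cx cy nx ny hxy]]] := H _ cab.
  exists (b * x).
  have e : eqJ (a * (b * x) - b * x * a) y.
    apply: eqJ_trans hxy; rewrite mulrBl.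
    apply: eqJ_subr; first exact: eqJ_eq (mulrA _ _ _).
    rewrite -!mulrA; apply: eqJ_mul (eqJ_refl b) (cx a).
  split; first exact: central_eqJ e cy.
  by move=> hJ; apply: ny; apply: eqJ_J (eqJ_sym e) hJ.
set c := a * d - d * a in cc nc.
have cdef : c = a * d - d * a by [].
clearbody c.
have ncc : ~ J (c * c) by move=> h; apply: nc; apply: Jsp.
have ed : eqJ (a * c * d - d * (a * c)) (c * c).
  rewrite {3}cdef mulrBl; apply: eqJ_subr.
    rewrite -!mulrA; apply: eqJ_mul (eqJ_refl a) _; exact: cc.
  by rewrite !mulrA; apply: eqJ_refl.
have nce : ~ central_mod J (a * c).
  by move=> ce; apply: ncc; apply: eqJ_J (eqJ_sym ed) (ce d).
have [z [w [cz cw nz nw hzw]]] := H _ nce.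
have h1 : J ((a * c * d - d * (a * c)) * z).
  apply/eqJ0; rewrite mulrBl.
  have e1 : eqJ (a * c * d * z) (w * d).
    apply: eqJ_trans (eqJ_eq (esym (mulrA _ _ _))) _.
    apply: eqJ_trans (eqJ_mul (eqJ_refl _) (eqJ_sym (cz d))) _.
    apply: eqJ_trans (eqJ_eq (mulrA _ _ _)) _.
    exact: eqJ_mul hzw (eqJ_refl d).
  have e2 : eqJ (d * (a * c) * z) (d * w).
    rewrite -mulrA; exact: eqJ_mul (eqJ_refl d) hzw.
  apply: eqJ_trans (eqJ_subr e1 e2) _.
  by rewrite /eqJ subr0; apply: cw.
have h2 : J (c * c * z) by apply: eqJ_J (eqJ_sym (eqJ_mul ed (eqJ_refl z))) h1.
have cu : central_mod J (c * z) by apply: central_mul.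
have uu : J (c * z * (c * z)).
  have e : eqJ (c * z * (c * z)) (c * c * z * z).
    rewrite -!mulrA; apply: (eqJ_mul (eqJ_refl c)).
    rewrite !mulrA; apply: eqJ_mul _ (eqJ_refl z); exact: cz.
  exact: eqJ_J e (JMr z h2).
have Ju := Jsp cu uu.
apply: nw; apply: eqJ_J (eqJ_sym hzw) _.
by rewrite -mulrA; apply: JMl.
Qed.
End Cong.
Section Jac.
Variable A : nzRingType.
Local Notation J := (@jacobson A).

Lemma jac0 : J 0. Proof. by move=> M [[]]. Qed.
Lemma jacD x y : J x -> J y -> J (x + y).
Proof. by move=> hx hy M hM; case: (hM) => [[_ hD _ _] _ _]; apply: hD; [apply: hx|apply: hy]. Qed.
Lemma jacN x : J x -> J (- x).
Proof. by move=> hx M hM; case: (hM) => [[_ _ hN _] _ _]; apply: hN; apply: hx. Qed.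
Lemma jacMr x r : J x -> J (x * r).
Proof. by move=> hx M hM; case: (hM) => [[_ _ _ hR] _ _]; apply: hR; apply: hx. Qed.

Lemma shift_max (M : A -> Prop) r : maximal_right_ideal M -> ~ M r ->
  maximal_right_ideal (fun x => M (r * x)).
Proof.
move=> [[M0 MD MN MR] _ Mmax] nr; split.
- split; first by rewrite mulr0.
  + by move=> x y hx hy; rewrite mulrDr; apply: MD.
  + by move=> x hx; rewrite mulrN; apply: MN.
  + by move=> x s hx; rewrite mulrA; apply: MR.
- by exists 1; rewrite mulr1.
move=> N [N0 ND NN NR] sub.
pose N' x := exists n m, [/\ N n, M m & x = r * n + m].
have N'id : right_ideal N'.
  split.
  - by exists 0, 0; rewrite mulr0 addr0.
  - move=> x y [n [m [hn hm ->]]] [n' [m' [hn' hm' ->]]].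
    exists (n + n'), (m + m'); split; [exact: ND|exact: MD|].
    by rewrite mulrDr addrACA.
  - move=> x [n [m [hn hm ->]]]; exists (- n), (- m); split; [exact: NN|exact: MN|].
    by rewrite opprD mulrN.
  - move=> x s [n [m [hn hm ->]]]; exists (n * s), (m * s); split; [exact: NR|exact: MR|].
    by rewrite mulrDl mulrA.
have MN' : forall x, M x -> N' x by move=> x hx; exists 0, x; rewrite mulr0 add0r.
case: (Mmax N' N'id MN') => [iff|all].
- left=> x; split; last exact: sub.
  move=> hx; apply/iff; exists x, 0; split => //; by rewrite addr0.
- right=> y; have [n [m [hn hm e]]] := all (r * y).
  have hyn : N (y - n).
    apply: sub; have -> : r * (y - n) = m by rewrite mulrBr e addrC addKr.
    done.
  by have := ND _ _ hyn hn; rewrite subrK.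
Qed.

Lemma jacMl x r : J x -> J (r * x).
Proof.
move=> hx M hM; case: (classic (M r)) => hr.
  by case: (hM) => [[_ _ _ hR] _ _]; apply: hR.
exact: (hx _ (shift_max hM hr)).
Qed.

Lemma jac_sp u : central_mod J u -> J (u * u) -> J u.
Proof.
move=> cu uu M hM; apply: NNPP => nu.
case: (hM) => [[M0 MD MN MR] _ Mmax].
pose N x := exists m s, M m /\ x = m + u * s.
have Nid : right_ideal N.
  split.
  - by exists 0, 0; rewrite mulr0 addr0.
  - move=> x y [m [s [hm ->]]] [m' [s' [hm' ->]]].
    exists (m + m'), (s + s'); split; first exact: MD.
    by rewrite mulrDr addrACA.
  - move=> x [m [s [hm ->]]]; exists (- m), (- s); split; first exact: MN.
    by rewrite opprD mulrN.
  - move=> x t [m [s [hm ->]]]; exists (m * t), (s * t); split; first exact: MR.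
    by rewrite mulrDl mulrA.
have MN' : forall x, M x -> N x by move=> x hx; exists x, 0; rewrite mulr0 addr0.
case: (Mmax N Nid MN') => [iff|all].
- apply: nu; apply/iff; exists 0, 1; split => //; by rewrite mulr1 add0r.
- have [m [s [hm e]]] := all 1.
  apply: nu.
  have -> : u = m * u + (u * m - m * u) + u * u * s.
    by rewrite (addrC (m * u)) subrK -mulrA -mulrDr -e mulr1.
  apply: (MD); [apply: (MD)|].
  + exact: MR.
  + exact: (cu m M hM).
  + exact: (MR _ _ (uu M hM)).
Qed.

Lemma extend_max (I : A -> Prop) : right_ideal I -> ~ I 1 ->
  exists M, maximal_right_ideal M /\ forall x, I x -> M x.
Proof.
move=> Iid nI1.
pose T := {N : A -> Prop | right_ideal N /\ ~ N 1 /\ forall x, I x -> N x}.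
pose R (s t : T) := `[< forall x, sval s x -> sval t x >].
have t0 : T by exists I.
have [t tmax] : exists t, premaximal R t.
  apply: (@ZL_preorder T t0 R).
  - by move=> t; apply/asboolP.
  - by move=> r s t /asboolP h1 /asboolP h2; apply/asboolP => x /h1/h2.
  - move=> C Ctot.
    pose U x := I x \/ exists s, C s /\ sval s x.
    have Uid : right_ideal U.
      case: (Iid) => [I0 ID IN IR].
      split.
      - by left.
      - move=> x y [hx|[s [Cs hx]]] [hy|[s' [Cs' hy]]].
        + by left; apply: ID.
        + right; exists s'; split=> //; case: (svalP s') => [[_ D _ _] [_ Is]].
          by apply: D => //; apply: Is.
        + right; exists s; split=> //; case: (svalP s) => [[_ D _ _] [_ Is]].
          by apply: D => //; apply: Is.
        + have [/asboolP h|/asboolP h] := Ctot _ _ Cs Cs'.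
          * right; exists s'; split=> //; case: (svalP s') => [[_ D _ _] _].
            by apply: D => //; apply: h.
          * right; exists s; split=> //; case: (svalP s) => [[_ D _ _] _].
            by apply: D => //; apply: h.
      - move=> x [hx|[s [Cs hx]]]; first by left; apply: IN.
        by right; exists s; split=> //; case: (svalP s) => [[_ _ Nn _] _]; apply: Nn.
      - move=> x r [hx|[s [Cs hx]]]; first by left; apply: IR.
        by right; exists s; split=> //; case: (svalP s) => [[_ _ _ Nr] _]; apply: Nr.
    have nU1 : ~ U 1.
      case=> [//|[s [_ hs]]]; by case: (svalP s) => [_ [h _]]; apply: h.
    exists (exist _ U (conj Uid (conj nU1 (fun x h => or_introl h)))).
    by move=> s Cs; apply/asboolP => x hx /=; right; exists s.
case: t tmax => N [Nid [nN1 IN]] tmax.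
exists N; split=> //; split=> //; first by exists 1.
move=> N' N'id sub.
case: (classic (N' 1)) => h1.
  by right=> x; case: N'id => [_ _ _ R']; rewrite -(mul1r x); apply: R'.
left.
have IN' : forall x, I x -> N' x by move=> x /IN /sub.
have := tmax (exist _ N' (conj N'id (conj h1 IN'))).
move=> /(_ (introT (asboolP _) sub)) /asboolP /= h.
by move=> x; split; [apply: h|apply: sub].
Qed.

End Jac.

Section Main.
Variable A : nzRingType.
Local Notation J := (@jacobson A).

Lemma inv_right k : J k -> exists u, (1 - k) * u = 1.
Proof.
move=> Jk; apply: NNPP => nex.
pose I x := exists t, x = (1 - k) * t.
have Iid : right_ideal I.
  split.
  - by exists 0; rewrite mulr0.
  - by move=> x y [t ->] [t' ->]; exists (t + t'); rewrite mulrDr.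
  - by move=> x [t ->]; exists (- t); rewrite mulrN.
  - by move=> x r [t ->]; exists (t * r); rewrite mulrA.
have nI1 : ~ I 1 by move=> [t e]; apply: nex; exists t.
have [M [hM IM]] := extend_max Iid nI1.
case: (hM) => [[_ MD _ _] [x nx] _]; apply: nx.
have M1 : M 1.
  have -> : (1 : A) = (1 - k) + k by rewrite subrK.
  apply: MD; last exact: Jk.
  by apply: IM; exists 1; rewrite mulr1.
by case: (hM) => [[_ _ _ MR] _ _]; rewrite -(mul1r x); apply: MR.
Qed.

Lemma inv_left k : J k -> exists u, u * (1 - k) = 1.
Proof.
move=> Jk; have [u hu] := inv_right Jk.
have Jk' : J (- (k * u)) by apply: jacN; apply: jacMr.
have [v hv] := inv_right Jk'.
have eu : 1 - - (k * u) = u.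
  by rewrite opprK -{1}hu mulrBl mul1r subrK.
rewrite eu in hv.
exists u.
have : (1 - k) * (u * v) = v by rewrite mulrA hu mul1r.
by rewrite hv mulr1 => ->.
Qed.

Lemma jac_left (M : A -> Prop) : maximal_left_ideal M ->
  commutative_mod J -> forall x, J x -> M x.
Proof.
move=> hM comm j Jj; apply: NNPP => nj.
case: (hM) => [[M0 MD MN MR] [x0 nx0] Mmax].
pose N x := exists m s, M m /\ x = m + s * j.
have Nid : left_ideal N.
  split.
  - by exists 0, 0; rewrite mul0r addr0.
  - move=> x y [m [s [hm ->]]] [m' [s' [hm' ->]]].
    exists (m + m'), (s + s'); split; first exact: MD.
    by rewrite mulrDl addrACA.
  - move=> x [m [s [hm ->]]]; exists (- m), (- s); split; first exact: MN.
    by rewrite opprD mulNr.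
  - move=> x t [m [s [hm ->]]]; exists (t * m), (t * s); split; first exact: MR.
    by rewrite mulrDr mulrA.
have MN' : forall x, M x -> N x by move=> x hx; exists x, 0; rewrite mul0r addr0.
case: (Mmax N Nid MN') => [iff|all].
  by apply: nj; apply/iff; exists 0, 1; split => //; rewrite mul1r add0r.
have [m [s [hm e]]] := all 1.
have Jk : J (s * j) by apply: jacMl.
have [u hu] := inv_left Jk.
have em : m = 1 - s * j by rewrite e addrK.
apply: nx0; rewrite -(mulr1 x0) -hu -em mulrA; exact: MR.
Qed.

End Main.

Theorem mainTheorem1 (A : nzRingType) :
  centrally_essential_mod (@jacobson A) ->
  commutative_mod (@jacobson A) /\ right_quasi_invariant A /\ left_quasi_invariant A.
Proof.
move=> H.
have comm : commutative_mod (@jacobson A).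
  exact: (comm_mod (@jac0 A) (@jacD A) (@jacN A) (@jacMr A) (@jacMl A) (@jac_sp A) H).
split=> //; split.
- move=> M hM; have hM' := hM; case: hM' => [[M0 MD MN MR] _ _].
  split; first by split.
  split=> // x r hx.
  have -> : r * x = (r * x - x * r) + x * r by rewrite subrK.
  apply: MD; last exact: MR.
  exact: (comm r x M hM).
- move=> M hM; have JM := jac_left hM comm.
  case: (hM) => [[M0 MD MN MR] _ _].
  split; last by split.
  split=> // x r hx.
  have -> : x * r = (x * r - r * x) + r * x by rewrite subrK.
  apply: MD; last exact: MR.
  exact: JM (comm x r).
Qed.
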